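(* Let $\Omega\subset\mathbb{P}(\mathbb{R}^d)$ be a properly convex domain and $K\subset\Omega$ a compact subset. There exist $\varepsilon>0$ and $L>0$ such that for every $k\in\{1,\dots,d-1\}$ and every $g\in\mathrm{Aut}(\Omega)$ with $\frac{\sigma_k}{\sigma_{k+1}}(g)>L$, we have $\inf_{x\in K}\mathrm{dist}(x,\mathbb{P}(\Xi_k(g)))>\varepsilon$.
   Context: An open set $\Omega\subset\mathbb{P}(\mathbb{R}^d)$ is a properly convex domain if its closure is a bounded convex subset of some affine chart. $\mathrm{Aut}(\Omega)$ is the group of $g\in\mathsf{GL}_d(\mathbb{R})$ with $g\Omega=\Omega$. For $g$ with singular values $\sigma_1(g)\ge\dots\ge\sigma_d(g)$ and Cartan decomposition $g=k_g\mathrm{diag}(\sigma_1(g),\dots,\sigma_d(g))k_g'$ ($k_g,k_g'\in\mathsf{O}(d)$), if $\sigma_k(g)>\sigma_{k+1}(g)$ then $\Xi_k(g):=k_g\langle e_1,\dots,e_k\rangle$. $\mathbb{P}(\mathbb{R}^d)$ carries the metric $d_{\mathbb{P}}([u],[v])=\sqrt{1-\frac{\langle u,v\rangle^2}{\|u\|^2\|v\|^2}}$ and $\mathrm{dist}(x,Y)$ is the minimal $d_{\mathbb{P}}$-distance from $x$ to $Y$. *)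

(* Defs.v *)
From HB Require Import structures.
From mathcomp Require Import all_boot all_order all_algebra.
From mathcomp Require Import all_classical all_reals.
From mathcomp Require Import ereal.
Set Implicit Arguments. Unset Strict Implicit. Unset Printing Implicit Defensive.
Import Order.TTheory GRing.Theory Num.Theory.
Local Open Scope ring_scope.
Local Open Scope classical_set_scope.

(* Points of P(R^d) are represented by nonzero column vectors v, [v] = line
   through v.  A subset of P(R^d) is represented by its (punctured) cone of
   representing vectors: a set of nonzero vectors stable by nonzero scaling. *)

Section Defs.
Variables (R : realType) (d : nat).
Notation vec := 'cV[R]_d.

Definition dotv (u v : vec) : R := (u^T *m v) 0 0.

Definition dP (u v : vec) : R :=
  Num.sqrt (1 - (dotv u v) ^+ 2 / (dotv u u * dotv v v)).

Definition is_pset (A : set vec) : Prop :=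
  (forall v, A v -> v != 0) /\ (forall v t, A v -> t != 0 -> A (t *: v)).

Definition popen (A : set vec) : Prop :=
  forall v, A v -> exists2 e : R, 0 < e &
    forall w, w != 0 -> dP v w < e -> A w.

Definition pclosure (A : set vec) : set vec :=
  [set v | v != 0 /\ forall e : R, 0 < e -> exists2 w, A w & dP v w < e].

Definition pcompact (A : set vec) : Prop :=
  forall (I : Type) (U : I -> set vec),
    (forall i, popen (U i)) ->
    (forall v, A v -> exists i, U i v) ->
    exists (n : nat) (f : nat -> I),
      forall v, A v -> exists2 j, (j < n)%N & U (f j) v.

(* Properly convex domain: an open set whose closure is a bounded convex
   subset of some affine chart {[v] : <a,v> <> 0} (a <> 0); the chart is
   identified with the affine hyperplane {w : <a,w> = 1} via [v] |-> v/<a,v>. *)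
Definition properly_convex_domain (Omega : set vec) : Prop :=
  is_pset Omega /\ popen Omega /\
  exists a : vec, a != 0 /\
    (forall v, pclosure Omega v -> dotv a v != 0) /\
    let S := [set w | pclosure Omega w /\ dotv a w = 1] in
    (forall u w (t : R), S u -> S w -> 0 <= t -> t <= 1 ->
        S ((1 - t) *: u + t *: w)) /\
    (exists M : R, forall w, S w -> dotv w w <= M).

Definition in_Aut (Omega : set vec) (g : 'M[R]_d) : Prop :=
  g \in unitmx /\ [set g *m v | v in Omega] = Omega.

Definition orthogonal_mx (k : 'M[R]_d) : Prop := k^T *m k = 1%:M.

(* Cartan decomposition g = k diag(s 1, ..., s d) k' with k, k' in O(d) and
   s 1 >= ... >= s d >= 0 (so s i = sigma_i(g), 1-based indexing). *)
Definition cartan_decomp (g k k' : 'M[R]_d) (s : nat -> R) : Prop :=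
  orthogonal_mx k /\ orthogonal_mx k' /\
  (forall i j, (1 <= i)%N -> (i <= j)%N -> (j <= d)%N -> s j <= s i) /\
  (forall i, (1 <= i <= d)%N -> 0 <= s i) /\
  g = k *m diag_mx (\row_(i < d) s i.+1) *m k'.

(* P(Xi_k(g)) = P(k <e_1, ..., e_k>), as the cone of nonzero vectors *)
Definition PXi (k : 'M[R]_d) (n : nat) : set vec :=
  [set y | y != 0 /\ exists c : vec,
      (forall i : 'I_d, (n <= i)%N -> c i 0 = 0) /\ y = k *m c].

Definition pdist (x : vec) (Y : set vec) : R := inf [set dP x y | y in Y].

End Defs.

(* Main.v *)
Require Import Defs.
From HB Require Import structures.
From mathcomp Require Import all_boot all_order all_algebra.
From mathcomp Require Import all_classical all_reals.
From mathcomp Require Import ereal.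
From mathcomp Require Import ring lra.
Import Order.TTheory GRing.Theory Num.Theory.
Local Open Scope ring_scope.
Local Open Scope classical_set_scope.

Section Aux.
Variables (R : realType) (d : nat).
Notation vec := 'cV[R]_d.
Notation dot := (@dotv R d).

Lemma dotvE (u v : vec) : dot u v = \sum_i u i 0 * v i 0.
Proof. by rewrite /dotv !mxE; apply: eq_bigr => i _; rewrite mxE. Qed.

Lemma dotvC (u v : vec) : dot u v = dot v u.
Proof. by rewrite !dotvE; apply: eq_bigr => i _; rewrite mulrC. Qed.

Lemma dotvDr (u v w : vec) : dot u (v + w) = dot u v + dot u w.
Proof. by rewrite !dotvE -big_split; apply: eq_bigr => i _; rewrite mxE mulrDr. Qed.

Lemma dotvDl (u v w : vec) : dot (v + w) u = dot v u + dot w u.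
Proof. by rewrite dotvC dotvDr !(dotvC u). Qed.

Lemma dotvZr (a : R) (u v : vec) : dot u (a *: v) = a * dot u v.
Proof. by rewrite !dotvE mulr_sumr; apply: eq_bigr => i _; rewrite mxE mulrCA. Qed.

Lemma dotvZl (a : R) (u v : vec) : dot (a *: v) u = a * dot v u.
Proof. by rewrite dotvC dotvZr dotvC. Qed.

Lemma dotvNr (u v : vec) : dot u (- v) = - dot u v.
Proof. by rewrite -scaleN1r dotvZr mulN1r. Qed.

Lemma dotvNl (u v : vec) : dot (- v) u = - dot v u.
Proof. by rewrite dotvC dotvNr dotvC. Qed.

Lemma dotvBr (u v w : vec) : dot u (v - w) = dot u v - dot u w.
Proof. by rewrite dotvDr dotvNr. Qed.

Lemma dotvBl (u v w : vec) : dot (v - w) u = dot v u - dot w u.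
Proof. by rewrite dotvDl dotvNl. Qed.

Lemma dotv_ge0 (u : vec) : 0 <= dot u u.
Proof. by rewrite dotvE; apply: sumr_ge0 => i _; rewrite -expr2 sqr_ge0. Qed.

Lemma dotv_eq0 (u : vec) : (dot u u == 0) = (u == 0).
Proof.
apply/idP/idP; last by move/eqP->; rewrite dotvE big1 // => i _; rewrite mxE mulr0.
rewrite dotvE psumr_eq0; last by move=> i _; rewrite -expr2 sqr_ge0.
move=> /allP H; apply/eqP/matrixP => i j; rewrite (ord1 j) mxE.
by have /implyP := H i (mem_index_enum _); move=> /(_ isT); rewrite mulf_eq0 orbb => /eqP.
Qed.

Lemma dotv_gt0 {u : vec} : u != 0 -> 0 < dot u u.
Proof. by move=> H; rewrite lt_def dotv_eq0 H dotv_ge0. Qed.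

Lemma dotv_sq (u v : vec) (t : R) :
  dot (u - t *: v) (u - t *: v) = dot u u - 2 * t * dot u v + t ^+ 2 * dot v v.
Proof.
rewrite !dotvBl !dotvBr !dotvZl !dotvZr (dotvC v u); ring.
Qed.

Lemma CS (u v : vec) : dot u v ^+ 2 <= dot u u * dot v v.
Proof.
have [->|v0] := eqVneq v 0.
  by rewrite -(scale0r (0:vec)) !dotvZr !mul0r expr0n /= mulr0.
have hv := @dotv_gt0 v v0.
have := dotv_ge0 (u - (dot u v / dot v v) *: v).
rewrite dotv_sq => H.
have : 0 <= (dot u u - dot u v ^+ 2 / dot v v) * dot v v.
  apply: mulr_ge0; last exact: ltW.
  move: H; congr (0 <= _); field; exact: lt0r_neq0.
rewrite mulrBl -mulrA mulVf ?mulr1 ?subr_ge0 //; exact: lt0r_neq0.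
Qed.


Definition Nn (v : vec) : R := Num.sqrt (dot v v).

Lemma Nn_ge0 (v : vec) : 0 <= Nn v. Proof. exact: sqrtr_ge0. Qed.

Lemma Nn_sq (v : vec) : Nn v ^+ 2 = dot v v. Proof. by rewrite sqr_sqrtr // dotv_ge0. Qed.

Lemma Nn_gt0 {v : vec} : v != 0 -> 0 < Nn v.
Proof. by move=> h; rewrite sqrtr_gt0 dotv_gt0. Qed.

Lemma dot_le_Nn (u v : vec) : `|dot u v| <= Nn u * Nn v.
Proof.
rewrite /Nn -sqrtrM ?dotv_ge0 // -sqrtr_sqr ler_sqrt ?CS //.
by apply: mulr_ge0; apply: dotv_ge0.
Qed.

Lemma NnZ (c : R) (v : vec) : Nn (c *: v) = `|c| * Nn v.
Proof. by rewrite /Nn dotvZl dotvZr mulrA -expr2 sqrtrM ?sqr_ge0 // sqrtr_sqr. Qed.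

Lemma NnD (u v : vec) : Nn (u + v) <= Nn u + Nn v.
Proof.
have h : 0 <= Nn u + Nn v by rewrite addr_ge0 ?Nn_ge0.
rewrite -(ger0_norm h) -sqrtr_sqr /Nn ler_sqrt ?sqr_ge0 //.
rewrite dotvDl !dotvDr (dotvC v u) sqrrD !Nn_sq.
have := dot_le_Nn u v; rewrite /Nn => h2.
have h3 := ler_norm (dot u v).
lra.
Qed.

Definition tp (u v : vec) : R := dot u v / dot v v.

Lemma dP_ge0 (u v : vec) : 0 <= dP u v. Proof. exact: sqrtr_ge0. Qed.

Lemma dP_sym (u v : vec) : dP u v = dP v u.
Proof. by rewrite /dP (dotvC u v) (mulrC (dotv u u)). Qed.

Lemma dP_sq (u v : vec) : u != 0 -> v != 0 ->
  dot (u - tp u v *: v) (u - tp u v *: v) = dP u v ^+ 2 * dot u u.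
Proof.
move=> hu hv; have pu := dotv_gt0 hu; have pv := dotv_gt0 hv.
have E : dot (u - tp u v *: v) (u - tp u v *: v) =
   (1 - dot u v ^+ 2 / (dot u u * dot v v)) * dot u u.
  rewrite dotv_sq /tp; field; apply/andP; split; exact: lt0r_neq0.
rewrite /dP sqr_sqrtr -?E //.
have := dotv_ge0 (u - tp u v *: v); rewrite E => H.
by rewrite -(pmulr_lge0 _ pu).
Qed.

Lemma dP_min (u v : vec) (s : R) : u != 0 -> v != 0 ->
  dP u v ^+ 2 * dot u u <= dot (u - s *: v) (u - s *: v).
Proof.
move=> hu hv; have pv := dotv_gt0 hv.
rewrite -dP_sq // !dotv_sq.
have -> : dot u u - 2 * s * dot u v + s ^+ 2 * dot v v =
   dot u u - 2 * tp u v * dot u v + tp u v ^+ 2 * dot v v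
   + dot v v * (s - tp u v) ^+ 2.
  rewrite /tp; field; exact: lt0r_neq0.
by rewrite lerDl mulr_ge0 ?sqr_ge0 // ltW.
Qed.

Lemma dP_Nn_eq (u v : vec) : u != 0 -> v != 0 -> dP u v * Nn u = Nn (u - tp u v *: v).
Proof.
move=> hu hv; rewrite /Nn dP_sq // sqrtrM ?sqr_ge0 // sqrtr_sqr ger0_norm //.
exact: dP_ge0.
Qed.

Lemma dP_Nn_min (u v : vec) (s : R) : u != 0 -> v != 0 -> dP u v * Nn u <= Nn (u - s *: v).
Proof.
move=> hu hv; rewrite /Nn -(ger0_norm (dP_ge0 u v)) -sqrtr_sqr -sqrtrM ?sqr_ge0 //.
by rewrite ler_sqrt ?dotv_ge0 // dP_min.
Qed.

Lemma dP_tri {u v w : vec} : u != 0 -> v != 0 -> w != 0 -> dP u w <= dP u v + dP v w.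
Proof.
move=> hu hv hw.
have pu := Nn_gt0 hu; have pv := Nn_gt0 hv.
have h1 := @dP_Nn_min u w (tp u v * tp v w) hu hw.
have E : u - (tp u v * tp v w) *: w = (u - tp u v *: v) + tp u v *: (v - tp v w *: w).
  by rewrite scalerBr scalerA addrA subrK.
rewrite E in h1.
move: h1 => /le_trans /(_ (NnD _ _)).
rewrite NnZ -dP_Nn_eq // -dP_Nn_eq // => h1.
have h2 : `|tp u v| * Nn v <= Nn u.
  have -> : `|tp u v| * Nn v = `|dot u v| / Nn v.
    rewrite /tp normrM normfV (ger0_norm (dotv_ge0 v)) -Nn_sq.
    field; exact: lt0r_neq0.
  by rewrite ler_pdivrMr // dot_le_Nn.
have h3 : 0 <= dP v w := dP_ge0 v w.
have h5 : `|tp u v| * (dP v w * Nn v) <= dP v w * Nn u.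
  by rewrite mulrCA ler_wpM2l.
have h4 : dP u w * Nn u <= (dP u v + dP v w) * Nn u.
  apply: (le_trans h1); rewrite mulrDl; lra.
by rewrite ler_pM2r in h4.
Qed.


Lemma dP_refl (v : vec) : v != 0 -> dP v v = 0.
Proof.
move=> hv; have pv := dotv_gt0 hv.
by rewrite /dP mulrV ?subrr ?sqrtr0 // unitfE mulf_neq0 // lt0r_neq0.
Qed.

Lemma minpos n (h : nat -> R) :
  exists2 r : R, 0 < r & forall j, (j < n)%N -> 0 < h j -> r <= h j.
Proof.
elim: n => [|n [r r0 IH]]; first by exists 1.
exists (Num.min r (if 0 < h n then h n else 1)).
  by rewrite lt_min r0; case: ifP => // _; exact: ltr01.
move=> j; rewrite ltnS leq_eqVlt => /orP[/eqP->|jn] hj.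
  by rewrite hj ge_min lexx orbT.
by rewrite ge_min IH.
Qed.

Lemma unif_radius (Omega K : set vec) :
  is_pset K -> pcompact K -> K `<=` Omega -> popen Omega ->
  exists2 r0 : R, 0 < r0 &
    forall x w, K x -> w != 0 -> dP x w < r0 -> Omega w.
Proof.
move=> [K0 _] cK KO oO.
pose U (p : vec * R) : set vec := [set u | u != 0 /\ p.1 != 0 /\ 0 < p.2 /\
   (forall w, w != 0 -> dP p.1 w < 2 * p.2 -> Omega w) /\ dP p.1 u < p.2].
have oU : forall p, popen (U p).
  move=> [v e] u; rewrite /U /= => -[u0 [v0 [e0 [B hu]]]].
  exists (e - dP v u); first by rewrite subr_gt0.
  move=> w w0 hw; split => //; split => //; split => //; split => //.
  have := dP_tri v0 u0 w0; rewrite /=; lra.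
have cov : forall v, K v -> exists p, U p v.
  move=> v Kv; have v0 := K0 v Kv.
  have [e e0 B] := oO v (KO v Kv).
  exists (v, e / 2); rewrite /U /=; split => //; split => //; split.
    by rewrite divr_gt0.
  split; last by rewrite dP_refl // divr_gt0.
  move=> w w0 hw; apply: B => //; move: hw.
  by rewrite mulrC divfK // pnatr_eq0.
have [n [f Hf]] := cK _ U oU cov.
have [r r0 Hr] := minpos n (fun j => (f j).2).
exists r => // x w Kx w0 hw.
have [j jn [x0 [v0 [e0 [B hx]]]]] := Hf x Kx.
have := Hr j jn e0 => hr.
apply: B => //; have := dP_tri v0 x0 w0; lra.
Qed.


Lemma orth_dot (k : 'M[R]_d) (u v : vec) : k^T *m k = 1%:M ->
  dot (k *m u) (k *m v) = dot u v.
Proof. by move=> hk; rewrite /dotv trmx_mul mulmxA -(mulmxA u^T) hk mulmx1. Qed.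

Lemma orth_dotT (k : 'M[R]_d) (u v : vec) : k^T *m k = 1%:M ->
  dot (k^T *m u) (k^T *m v) = dot u v.
Proof. by move=> hk; apply: orth_dot; rewrite trmxK; apply: mulmx1C. Qed.

Lemma dot_pl (u v : vec) (t : R) :
  dot (u + t *: v) (u + t *: v) = dot u u + 2 * t * dot u v + t ^+ 2 * dot v v.
Proof. rewrite !dotvDl !dotvDr !dotvZl !dotvZr (dotvC v u); ring. Qed.

Lemma half_sum (x W : vec) (c : R) :
  2^-1 *: ((x + c *: W) + (x + (- c) *: W)) = x.
Proof. by apply/matrixP => i j; rewrite !mxE; field. Qed.

Lemma half_diff (x W : vec) (c : R) :
  2^-1 *: ((x + c *: W) - (x + (- c) *: W)) = c *: W.
Proof. by apply/matrixP => i j; rewrite !mxE; field. Qed.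

Lemma dot_delta (i : 'I_d) : dot (delta_mx i 0) (delta_mx i 0) = 1.
Proof.
rewrite dotvE (bigD1 i) //= !mxE !eqxx mulr1 big1 ?addr0 // => j ji.
by rewrite !mxE (negbTE ji) mul0r.
Qed.


Lemma sq_mono (a b : R) : 0 <= a -> a <= b -> a ^+ 2 <= b ^+ 2.
Proof. move=> a0 ab; nra. Qed.

Lemma sq_le_inv (a b : R) : 0 <= b -> a ^+ 2 <= b ^+ 2 -> a <= b.
Proof. move=> b0 h; rewrite leNgt; apply/negP => ba; nra. Qed.

Lemma sq_norm_le (a b : R) : `|a| <= `|b| -> a ^+ 2 <= b ^+ 2.
Proof.
move=> h; rewrite -(real_normK (num_real a)) -(real_normK (num_real b)).
by apply: sq_mono.
Qed.

Lemma sqle (a b q : R) : 0 <= a -> a <= b -> (a * q) ^+ 2 <= (b * q) ^+ 2.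
Proof. by move=> a0 ab; rewrite !exprMn ler_wpM2r ?sqr_ge0 // sq_mono. Qed.

End Aux.
Arguments dotvE {R d}.
Arguments dotvC {R d}.
Arguments dotvDr {R d}.
Arguments dotvDl {R d}.
Arguments dotvZr {R d}.
Arguments dotvZl {R d}.
Arguments dotvNr {R d}.
Arguments dotvNl {R d}.
Arguments dotvBr {R d}.
Arguments dotvBl {R d}.
Arguments dotv_ge0 {R d}.
Arguments dotv_eq0 {R d}.
Arguments dotv_sq {R d}.
Arguments CS {R d}.
Arguments Nn_ge0 {R d}.
Arguments Nn_sq {R d}.
Arguments dot_le_Nn {R d}.
Arguments NnZ {R d}.
Arguments NnD {R d}.
Arguments dP_ge0 {R d}.
Arguments dP_sym {R d}.
Arguments dP_sq {R d}.
Arguments dP_min {R d}.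
Arguments dP_Nn_eq {R d}.
Arguments dP_Nn_min {R d}.
Arguments dP_tri {R d}.
Arguments dP_refl {R d}.
Arguments unif_radius {R d}.
Arguments orth_dot {R d}.
Arguments orth_dotT {R d}.
Arguments dot_pl {R d}.
Arguments half_sum {R d}.
Arguments half_diff {R d}.
Arguments dot_delta {R d}.
Arguments tp {R d}.
Arguments Nn {R d}.
Arguments dotv_gt0 {R d u}.
Arguments Nn_gt0 {R d v}.

Theorem lemma4p1 (R : realType) (d : nat) (Omega K : set 'cV[R]_d) :
  properly_convex_domain Omega ->
  is_pset K -> pcompact K -> K `<=` Omega ->
  exists eps L : R, 0 < eps /\ 0 < L /\
    forall (k : nat) (g k1 k2 : 'M[R]_d) (s : nat -> R),
      (1 <= k <= d.-1)%N ->
      in_Aut Omega g ->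
      cartan_decomp g k1 k2 s ->
      L < s k / s k.+1 ->
      (eps%:E < ereal_inf [set (pdist x (PXi k1 k))%:E | x in K])%E.
Proof.
move=> [pO [oO [a [a0 [aC [_ [M HM]]]]]]] pK cK KO.
have [K0 _] := pK.
have [O0 Os] := pO.
have Ocl : forall v, Omega v -> pclosure Omega v.
  move=> v Ov; split; first exact: O0.
  by move=> e e0; exists v => //; rewrite dP_refl // O0.
pose M' := Num.max M 0.
have M'0 : 0 <= M' by rewrite le_max lexx orbT.
have HB : forall y, Omega y -> dotv y y <= M' * dotv a y ^+ 2.
  move=> y Oy; have ay := aC y (Ocl y Oy).
  pose w := (dotv a y)^-1 *: y.
  have Sw : dotv w w <= M.
    apply: HM; split; first by apply: Ocl; apply: Os => //; rewrite invr_eq0.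
    by rewrite /w dotvZr mulVf.
  have : dotv w w = (dotv a y)^-2 * dotv y y.
    by rewrite /w dotvZl dotvZr mulrA -expr2 exprVn.
  move=> E; rewrite E in Sw.
  have Sw' : (dotv a y)^-2 * dotv y y <= M' by apply: (le_trans Sw); rewrite le_max lexx.
  have p2 : 0 < dotv a y ^+ 2 by rewrite lt_def sqr_ge0 expf_neq0.
  rewrite (_ : dotv y y = ((dotv a y)^-2 * dotv y y) * dotv a y ^+ 2); last first.
    by rewrite mulrAC mulVf ?mul1r // expf_neq0.
  by rewrite ler_wpM2r // ltW.
have [r0 r00 Hr0] := @unif_radius R d Omega K pK cK KO oO.
pose r := Num.min r0 1 / 2.
have r_gt0 : 0 < r by rewrite divr_gt0 // lt_min r00 ltr01.
have r_lt0 : r < r0.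
  have : Num.min r0 1 <= r0 by rewrite ge_min lexx.
  rewrite /r; lra.
have r_lt1 : r < 1.
  have : Num.min r0 1 <= 1 by rewrite ge_min lexx orbT.
  rewrite /r; lra.
pose C := 2 * M' * dotv a a.
have C0 : 0 <= C by rewrite /C mulr_ge0 ?mulr_ge0 ?dotv_ge0.
pose eta := Num.min 1 (r ^+ 2 / (4 * (C + 1))).
have eta_gt0 : 0 < eta.
  by rewrite lt_min ltr01 divr_gt0 ?exprn_gt0 // mulr_gt0 //; lra.
have eta_le1 : eta <= 1 by rewrite ge_min lexx.
have eta_le : eta <= r ^+ 2 / (4 * (C + 1)) by rewrite ge_min lexx orbT.
have key : 2 * C * eta ^+ 2 < r ^+ 2.
  have h1 : eta ^+ 2 <= eta by rewrite expr2 ger_pMl.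
  have h2 : eta * (4 * (C + 1)) <= r ^+ 2.
    by rewrite -ler_pdivlMr // mulr_gt0 //; lra.
  have r2 : 0 < r ^+ 2 by rewrite exprn_gt0.
  nra.
exists (eta / 2), eta^-1; split; first by rewrite divr_gt0.
split; first by rewrite invr_gt0.
move=> k g k1 k2 s kd [gU gA] [ok1 [ok2 [mono [spos gE]]]] hL.
have d0 : (0 < d)%N by case/andP: kd => k1' kd'; apply: (leq_trans k1'); apply: (leq_trans kd'); apply: leq_pred.
have main : forall x y, K x -> PXi k1 k y -> eta <= dP x y.
  move=> x y Kx [y0 [c [hc yE]]].
  rewrite leNgt; apply/negP => hdp.
  have x0 := K0 x Kx; have Ox := KO x Kx.
  have xx := dotv_gt0 x0.
  pose t := tp x y; pose e := x - t *: y.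
  have ee : dotv e e <= eta ^+ 2 * dotv x x.
    rewrite /e /t dP_sq // ler_wpM2r ?dotv_ge0 // sq_mono ?dP_ge0 //; exact: ltW.
  have il_lt : (d.-1 < d)%N by rewrite ltn_predL.
  pose il : 'I_d := Ordinal il_lt.
  pose W : 'cV[R]_d := k1 *m delta_mx il 0.
  have WW : dotv W W = 1 by rewrite orth_dot // dot_delta.
  pose rho := r * Nn x.
  have rho_gt0 : 0 < rho by rewrite mulr_gt0 // Nn_gt0.
  have rho2 : rho ^+ 2 = r ^+ 2 * dotv x x by rewrite exprMn Nn_sq.
  have r21 : r ^+ 2 < 1 by rewrite expr_lt1 // ltW.
  have Omem : forall tau, `|tau| <= 1 -> Omega (x + (tau * rho) *: W).
    move=> tau htau.
    have t21 : tau ^+ 2 <= 1.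
      by rewrite -(real_normK (num_real tau)) expr_le1 ?normr_ge0.
    have w2 : dotv ((tau*rho) *: W) ((tau*rho) *: W) <= r^+2 * dotv x x.
      rewrite dotvZl dotvZr WW mulr1 -expr2 exprMn rho2.
      by rewrite ler_piMl ?sqr_ge0 // mulr_ge0 ?sqr_ge0 ?dotv_ge0.
    have hw0 : x + (tau*rho) *: W != 0.
      apply/eqP => h0.
      have xE : x = - ((tau*rho) *: W) by apply/eqP; rewrite -addr_eq0 h0.
      have w3 : dotv x x <= r^+2 * dotv x x.
        by rewrite {1 2}xE dotvNl dotvNr opprK.
      have : dotv x x < dotv x x.
        apply: (le_lt_trans w3); rewrite gtr_pMl //.
      by rewrite ltxx.
    apply: (Hr0 x) => //.
    have := @dP_min _ _ x (x + (tau * rho) *: W) 1 x0 hw0.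
    rewrite scale1r (_ : x - (x + _) = - ((tau*rho) *: W)); last first.
      by rewrite opprD addrA subrr add0r.
    rewrite dotvNl dotvNr opprK => h.
    have h2 : dP x (x + (tau * rho) *: W) ^+ 2 <= r ^+ 2.
      by rewrite -(ler_pM2r xx) (le_trans h w2).
    apply: (le_lt_trans _ r_lt0); apply: sq_le_inv => //; exact: ltW.
  have pre : forall u, Omega u -> exists v : 'cV[R]_d, Omega v /\ g *m v = u.
    move=> u Ou; have : [set g *m v | v in Omega] u by rewrite gA.
    by case=> v Ov <-; exists v.
  have ginj : forall v v' : 'cV[R]_d, g *m v = g *m v' -> v = v'.
    by move=> v v' h; rewrite -(mulKmx gU v) h mulKmx.
  have n1 : `|1:R| <= 1 by rewrite normr1.
  have nm1 : `|-1:R| <= 1 by rewrite normrN normr1.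
  have [v1 [O1 g1]] := pre _ (Omem 1 n1).
  have [v2 [O2 g2]] := pre _ (Omem (-1) nm1).
  pose v0 := 2^-1 *: (v1 + v2); pose dl := 2^-1 *: (v1 - v2).
  have gv0 : g *m v0 = x.
    by rewrite /v0 -scalemxAr mulmxDr g1 g2 mul1r mulN1r half_sum.
  have gdl : g *m dl = rho *: W.
    by rewrite /dl -scalemxAr mulmxBr g1 g2 mul1r mulN1r half_diff.
  clearbody v0 dl.
  have Omem' : forall tau, `|tau| <= 1 -> Omega (v0 + tau *: dl).
    move=> tau ht; have [v' [Ov' gv']] := pre _ (Omem tau ht).
    suff -> : v0 + tau *: dl = v' by [].
    apply: ginj; rewrite gv' mulmxDr gv0; congr (_ + _).
    by rewrite -scalerA -gdl scalemxAr.
  pose A := dotv a v0; pose B := dotv a dl.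
  have fA : forall tau, `|tau| <= 1 -> A + tau * B != 0.
    move=> tau ht; have := aC _ (Ocl _ (Omem' tau ht)); by rewrite dotvDr dotvZr.
  have BA : `|B| < `|A|.
    rewrite ltNge; apply/negP => hAB.
    have B0 : B != 0.
      apply/eqP => B0; move: hAB; rewrite B0 normr0 normr_le0 => /eqP A0.
      by have := fA 0; rewrite normr0 ler01 mul0r addr0 A0 eqxx => /(_ isT).
    have := fA (- (A / B)).
    rewrite normrN normrM normfV ler_pdivrMr ?normr_gt0 // mul1r hAB.
    by rewrite mulNr divfK // subrr eqxx => /(_ isT).
  have hp := HB _ (Omem' 1 n1).
  have hm := HB _ (Omem' (-1) nm1).
  rewrite dot_pl dotvDr dotvZr -/A -/B in hp.
  rewrite dot_pl dotvDr dotvZr -/A -/B in hm.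
  have hD : dotv dl dl <= C * dotv v0 v0.
    have cs := CS a v0; rewrite -/A in cs.
    have b2 : B ^+ 2 <= A ^+ 2 by apply: sq_norm_le; exact: ltW.
    have V0 := dotv_ge0 v0.
    have s1 : 2 * dotv v0 v0 + 2 * dotv dl dl <= M' * (2 * A ^+ 2 + 2 * B ^+ 2).
      have -> : M' * (2 * A ^+ 2 + 2 * B ^+ 2) = M' * (A + 1 * B) ^+ 2 + M' * (A + -1 * B) ^+ 2.
        by ring.
      move: hp hm; set X := dotv v0 dl; set V := dotv v0 v0; set D := dotv dl dl.
      move=> hp hm.
      have -> : 2 * V + 2 * D = (V + 2 * 1 * X + 1 ^+ 2 * D) + (V + 2 * -1 * X + (-1) ^+ 2 * D).
        by ring.
      exact: lerD.
    have s2 : M' * B ^+ 2 <= M' * A ^+ 2 by rewrite ler_wpM2l.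
    have s3 : M' * A ^+ 2 <= M' * (dotv a a * dotv v0 v0) by rewrite ler_wpM2l.
    rewrite /C.
    have : dotv dl dl <= 2 * M' * (dotv a a * dotv v0 v0) - dotv v0 v0 by lra.
    rewrite -mulrA; lra.
  pose Dg := diag_mx (\row_(i < d) s i.+1).
  have Deq : forall v u : 'cV[R]_d, g *m v = u -> Dg *m (k2 *m v) = k1^T *m u.
    by move=> v u h; rewrite -h gE !mulmxA ok1 mul1mx.
  have Dent : forall (q : 'cV[R]_d) i, (Dg *m q) i 0 = s i.+1 * q i 0.
    by move=> q i; rewrite mul_diag_mx !mxE.
  have sdpos := spos d.
  have il1 : (il.+1 = d)%N by rewrite /= prednK.
  have qdE := Deq _ _ gdl.
  rewrite scalemxAr /W (mulmxA k1^T) ok1 mul1mx in qdE.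
  have qdil : s d * (k2 *m dl) il 0 = rho.
    have := congr1 (fun m : 'cV[R]_d => m il 0) qdE; rewrite /= Dent il1 => ->.
    by rewrite !mxE eqxx mulr1.
  have sd0 : 0 < s d.
    rewrite lt_def spos ?andbT; last by rewrite d0 leqnn.
    by apply/eqP => h0; move: qdil; rewrite h0 mul0r => h; move: rho_gt0; rewrite -h ltxx.
  have hrho : rho ^+ 2 <= s d ^+ 2 * dotv dl dl.
    rewrite -(orth_dot k2 dl dl ok2) dotvE (bigD1 il) //= -qdil exprMn expr2 mulrDr.
    rewrite lerDl mulr_ge0 ?sqr_ge0 // sumr_ge0 // => i _; rewrite -expr2 sqr_ge0.
    by [].
  have q0E := Deq _ _ gv0.
  case/andP: kd => k1le kle.
  have kd1 : (k.+1 <= d)%N.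
    by apply: (leq_ltn_trans kle); rewrite ltn_predL.
  have kd2 : (k <= d)%N by apply: ltnW.
  have sk1 : s d <= s k.+1 by apply: mono.
  have sk1pos : 0 < s k.+1 := lt_le_trans sd0 sk1.
  rewrite ltr_pdivlMr // in hL.
  have hL' : s k.+1 < eta * s k.
    have := hL; rewrite -(ltr_pM2l eta_gt0) mulrA mulfV ?mul1r //; exact: lt0r_neq0.
  have term : forall i : 'I_d, (s d * (k2 *m v0) i 0) ^+ 2 <=
      eta ^+ 2 * ((k1^T *m x) i 0) ^+ 2 + ((k1^T *m e) i 0) ^+ 2.
    move=> i.
    have pE : (k1^T *m x) i 0 = s i.+1 * (k2 *m v0) i 0 by rewrite -q0E Dent.
    have eE : (k1^T *m e) i 0 = (k1^T *m x) i 0 - t * c i 0.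
      by rewrite /e mulmxBr -scalemxAr yE mulmxA ok1 mul1mx !mxE.
    have e2 := sqr_ge0 ((k1^T *m e) i 0).
    have p2 := sqr_ge0 ((k1^T *m x) i 0).
    case: (ltnP i k) => ik.
      have h1 : s k <= s i.+1 by apply: mono.
      have h3 : s d <= eta * s i.+1.
        have : eta * s k <= eta * s i.+1 by rewrite ler_wpM2l // ltW.
        lra.
      have := @sqle R (s d) (eta * s i.+1) ((k2 *m v0) i 0) (ltW sd0) h3.
      rewrite -mulrA exprMn -pE; lra.
    have h1 : s d <= s i.+1 by apply: mono => //; exact: ltn_ord.
    have := @sqle R (s d) (s i.+1) ((k2 *m v0) i 0) (ltW sd0) h1.
    rewrite -pE.
    have ep : (k1^T *m e) i 0 = (k1^T *m x) i 0 by rewrite eE hc // mulr0 subr0.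
    rewrite ep; have := mulr_ge0 (sqr_ge0 eta) p2; lra.
  have hV : s d ^+ 2 * dotv v0 v0 <= eta ^+ 2 * dotv x x + dotv e e.
    rewrite -(orth_dot k2 v0 v0 ok2) -(orth_dotT k1 x x ok1) -(orth_dotT k1 e e ok1) !dotvE.
    rewrite !mulr_sumr -big_split /=; apply: ler_sum => i _.
    have := term i; rewrite !expr2; lra.
  have fin : r ^+ 2 * dotv x x <= 2 * C * eta ^+ 2 * dotv x x.
    rewrite -rho2; apply: (le_trans hrho).
    have h1 : s d ^+ 2 * dotv dl dl <= s d ^+ 2 * (C * dotv v0 v0).
      by rewrite ler_wpM2l ?sqr_ge0.
    apply: (le_trans h1); rewrite mulrCA.
    have h2 : C * (s d ^+ 2 * dotv v0 v0) <= C * (eta^+2 * dotv x x + dotv e e).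
      by rewrite ler_wpM2l.
    apply: (le_trans h2).
    have h3 : C * dotv e e <= C * (eta ^+ 2 * dotv x x) by rewrite ler_wpM2l.
    lra.
  rewrite ler_pM2r // in fin.
  by have := lt_le_trans key fin; rewrite ltxx.
pose i0 : 'I_d := Ordinal d0.
have ne : forall x, [set dP x y | y in PXi k1 k] !=set0.
  move=> x; exists (dP x (k1 *m delta_mx i0 0)); exists (k1 *m delta_mx i0 0) => //.
  split.
    rewrite -dotv_eq0 orth_dot // dot_delta; exact: oner_neq0.
  exists (delta_mx i0 0); split => // i ki; rewrite mxE.
  have : i != i0.
    apply/eqP => ii; move: ki; rewrite ii /=; case/andP: kd => k1' _.
    by rewrite leqn0 => /eqP k0; rewrite k0 in k1'.
  by move/negbTE ->.
apply: (@lt_le_trans _ _ eta%:E); first by rewrite lte_fin ltr_pdivrMr // ltr_pMr // ltr1n.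
apply/ereal_infP => _ [x Kx <-]; rewrite lee_fin.
apply: lb_le_inf (ne x) _ => _ [y Py <-]; exact: main.
Qed.
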